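(* Let $\Delta$ be a pure $(d-1)$-dimensional simplicial complex on $[n]$, and let $\Gamma$ be the simplicial complex (collection of subsets of $[n]$ closed under taking subsets) with $I(\Delta)=I_\Gamma$. Then $\bar\Delta=\mathrm{skel}_\Gamma(d-1)$.
   Context: $S=K[x_1,\ldots,x_n]$, $x_F=\prod_{i\in F}x_i$. $I(\Delta)$ is the facet ideal, generated by $x_F$ for the facets (maximal faces) $F$ of $\Delta$; $I_\Gamma$ is the Stanley–Reisner ideal, generated by $x_F$ for $F\subseteq[n]$, $F\notin\Gamma$. $\Delta$ is pure if all facets have the same cardinality. $\bar\Delta$ is the simplicial complex whose facets are the $d$-element subsets $F\subseteq[n]$ with $F\notin\Delta$. $\mathrm{skel}_\Gamma(i)$ is the complex whose facets are the $i$-dimensional faces of $\Gamma$ (a face $F$ has dimension $|F|-1$). *)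

(* Defs.v *)
From HB Require Import structures.
From mathcomp Require Import all_boot all_order all_algebra.
From mathcomp Require Import mpoly.
Set Implicit Arguments. Unset Strict Implicit. Unset Printing Implicit Defensive.
Import GRing.Theory.
Local Open Scope ring_scope.

Definition is_complex (n : nat) (D : {set {set 'I_n}}) : Prop :=
  forall F G : {set 'I_n}, F \in D -> G \subset F -> G \in D.

Definition facets (n : nat) (D : {set {set 'I_n}}) : {set {set 'I_n}} :=
  [set F in D | [forall G in D, (F \subset G) ==> (G == F)]].

(* Pure (d-1)-dimensional: nonempty, and all facets have exactly d elements. *)
Definition pure_dim (n : nat) (D : {set {set 'I_n}}) (d : nat) : Prop :=
  D != set0 /\ forall F, F \in facets D -> #|F| = d.

Definition gen_complex (n : nat) (A : {set {set 'I_n}}) : {set {set 'I_n}} :=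
  [set G : {set 'I_n} | [exists F in A, G \subset F]].

Definition xmon (K : fieldType) (n : nat) (F : {set 'I_n}) : {mpoly K[n]} :=
  \prod_(i in F) 'X_i.

Definition in_mideal (K : fieldType) (n : nat) (A : {set {set 'I_n}})
    (p : {mpoly K[n]}) : Prop :=
  exists c : {set 'I_n} -> {mpoly K[n]}, p = \sum_(F in A) c F * xmon K F.

Definition facet_ideal (K : fieldType) (n : nat) (D : {set {set 'I_n}})
    : {mpoly K[n]} -> Prop := @in_mideal K n (facets D).

Definition SR_ideal (K : fieldType) (n : nat) (G : {set {set 'I_n}})
    : {mpoly K[n]} -> Prop := @in_mideal K n (~: G).

Definition bar_complex (n : nat) (D : {set {set 'I_n}}) (d : nat) : {set {set 'I_n}} :=
  gen_complex [set F : {set 'I_n} | (#|F| == d) && (F \notin D)].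

(* skel_Gamma(i): complex whose facets are the i-dimensional faces of Gamma
   (dim F = |F| - 1, an integer). *)
Definition skel (n : nat) (G : {set {set 'I_n}}) (i : int) : {set {set 'I_n}} :=
  gen_complex [set F in G | (#|F|%:Z - 1 == i)].

(* Main.v *)
Require Import Defs.
From HB Require Import structures.
From mathcomp Require Import all_boot all_order all_algebra.
From mathcomp Require Import mpoly.
Set Implicit Arguments. Unset Strict Implicit.
Import GRing.Theory.
Local Open Scope ring_scope.

Lemma in_mideal_xmon (K : fieldType) (n : nat) (A : {set {set 'I_n}}) (F : {set 'I_n}) :
  @in_mideal K n A (xmon K F) <-> exists2 G, G \in A & G \subset F.
Proof.
split.
- move=> [c hc].
  suff /existsP[G /andP[GA sGF]]: [exists G in A, G \subset F] by exists G.
  apply: contraT => /existsPn H.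
  pose v := fun i : 'I_n => if i \in F then (1:K) else 0.
  have := congr1 (meval v) hc.
  have ev : forall G : {set 'I_n}, meval v (xmon K G) = if G \subset F then 1 else 0.
    move=> G; rewrite /xmon rmorph_prod /=.
    case: ifP => sGF.
      by apply: big1 => i iG; rewrite mevalXU /v (subsetP sGF _ iG).
    move/negbT: sGF => /subsetPn [i iG iF].
    by rewrite (bigD1 i) //= mevalXU /v (negbTE iF) mul0r.
  rewrite ev subxx raddf_sum /= big1 => [/eqP|G GA]; first by rewrite oner_eq0.
  rewrite mevalM ev.
  by have := H G; rewrite GA /= => /negbTE ->; rewrite mulr0.
- move=> [G GA sGF].
  exists (fun H => if H == G then xmon K (F :\: G) else 0).
  rewrite (bigD1 G) //= eqxx big1 ?addr0.
    by rewrite /xmon (big_setID G) /= (setIidPr sGF) mulrC.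
  by move=> H /andP [_ /negbTE ->]; rewrite mul0r.
Qed.

Lemma facet_above (n : nat) (D : {set {set 'I_n}}) (G : {set 'I_n}) :
  G \in D -> exists2 H, H \in facets D & G \subset H.
Proof.
move=> GD.
have GP : G \in [set H in D | G \subset H] by rewrite inE GD subxx.
case: (arg_maxnP (fun H : {set 'I_n} => #|H|) GP) => H.
move=> HP Hmax; have : H \in [set H in D | G \subset H] by []. rewrite inE => /andP [HD sGH].
exists H => //; rewrite inE HD; apply/forallP => H'; apply/implyP => H'D.
apply/implyP => sHH'.
have : (#|H'| <= #|H|)%N by apply: (Hmax H'); change (H' \in [set H0 in D | G \subset H0]); rewrite inE H'D (subset_trans sGH sHH').
by move=> c; rewrite eq_sym eqEcard sHH' c.
Qed.

Theorem lemma1p1 (K : fieldType) (n d : nat) (Delta Gamma : {set {set 'I_n}}) :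
  is_complex Delta -> pure_dim Delta d ->
  is_complex Gamma ->
  (forall p : {mpoly K[n]}, @facet_ideal K n Delta p <-> @SR_ideal K n Gamma p) ->
  bar_complex Delta d = skel Gamma (d%:Z - 1).
Proof.
move=> _ [_ pure] cG hI.
rewrite /bar_complex /skel; congr gen_complex; apply/setP => F; rewrite !inE.
have -> : (#|F|%:Z - 1 == d%:Z - 1 :> int) = (#|F| == d).
  by rewrite (inj_eq (addIr _)) eqz_nat.
case: (boolP (#|F| == d)) => /eqP cF; rewrite ?andbF //= andbT.
apply/idP/idP => [FnD | FG].
- apply: contraT => FnG.
  have : @SR_ideal K n Gamma (xmon K F).
    by apply/in_mideal_xmon; exists F; rewrite ?inE ?subxx.
  move/hI/in_mideal_xmon => [G Gf sGF].
  have cG' := pure G Gf.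
  have eGF : G = F by apply/eqP; rewrite eqEcard sGF cF cG' leqnn.
  move: Gf; rewrite eGF inE => /andP [FD _].
  by rewrite FD in FnD.
- apply/negP => FD.
  have Ff : F \in facets Delta.
    have [H Hf sFH] := facet_above FD.
    have eFH : F = H by apply/eqP; rewrite eqEcard sFH cF (pure H Hf) leqnn.
    by rewrite eFH.
  have : @facet_ideal K n Delta (xmon K F).
    by apply/in_mideal_xmon; exists F; rewrite ?subxx.
  move/hI/in_mideal_xmon => [G GnG sGF].
  by move: GnG; rewrite inE (cG F G FG sGF).
Qed.
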